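(* Let $\vartheta:=\frac{1}{\sqrt2}\sup_{f\in U_1}A(H(\mathfrak{g}_f))$. Then $\vartheta\ge0.090435$.
   Context: $U_1$ is the set of absolutely continuous $f:[0,1]\to\mathbb{R}$ with $f(0)=0$ and $\int_0^1f'(s)^2ds\le1$. $\mathfrak{g}_f(0):=0$ and $\mathfrak{g}_f(t):=\frac1t\int_0^tf(s)\,ds$ for $0<t\le1$. $H(g):=\operatorname{hull}\{(t,g(t)):0\le t\le1\}\subset\mathbb{R}^2$, and $A$ denotes planar area. (This $\vartheta$ is the constant such that, for a planar random walk with i.i.d. increments of finite second moment, identity covariance and non-zero drift $\mu$, the convex hull $\mathcal G_n$ of its centre-of-mass process $G_n=\frac1n\sum_{i=1}^nS_i$ satisfies $\limsup_n A(\mathcal G_n)/(n^{3/2}\sqrt{\log\log n})=\vartheta\|\mu\|$ a.s.) *)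

(* Defs.v *)
From HB Require Import structures.
From mathcomp Require Import all_boot all_order all_algebra.
From mathcomp Require Import all_classical all_reals all_analysis.
Set Implicit Arguments. Unset Strict Implicit. Unset Printing Implicit Defensive.
Import Order.TTheory GRing.Theory Num.Theory.
Import numFieldNormedType.Exports.
Local Open Scope classical_set_scope.
Local Open Scope ring_scope.

Section Defs.
Variable R : realType.

Definition abs_continuous01 (f : R -> R) : Prop :=
  forall eps : R, 0 < eps -> exists2 delta : R, 0 < delta &
    forall (n : nat) (a b : nat -> R),
      (forall i, (i < n)%N -> 0 <= a i /\ a i <= b i /\ b i <= 1) ->
      (forall i j, (i < j)%N -> (j < n)%N -> b i <= a j) ->
      \sum_(i < n) (b i - a i) < delta ->
      \sum_(i < n) `|f (b i) - f (a i)| < eps.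

(* U_1 : absolutely continuous f on [0,1], f 0 = 0, int_0^1 f'(s)^2 ds <= 1.
   f' is the (a.e. defined) derivative, here MathComp's derive1. *)
Definition U1 : set (R -> R) :=
  [set f | [/\ abs_continuous01 f, f 0 = 0 &
     (\int[@lebesgue_measure R]_(s in `[0%R, 1%R]) ((derive1 f s) ^+ 2)%:E <= 1)%E]].

Definition gmean (f : R -> R) (t : R) : R :=
  if t == 0 then 0
  else t^-1 * Rintegral (@lebesgue_measure R) `[0, t] f.

Definition convex2 (C : set (R * R)) : Prop :=
  forall x y : R * R, C x -> C y -> forall l : R, 0 <= l -> l <= 1 ->
    C (l * x.1 + (1 - l) * y.1, l * x.2 + (1 - l) * y.2).

Definition hull2 (S : set (R * R)) : set (R * R) :=
  [set z | forall C, convex2 C -> S `<=` C -> C z].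

Definition Hg (g : R -> R) : set (R * R) :=
  hull2 [set (t, g t) | t in `[0, 1]].

Definition area (A : set (R * R)) : \bar R :=
  ((@lebesgue_measure R) \x (@lebesgue_measure R)) A.

Definition vartheta : \bar R :=
  ((Num.sqrt (2 : R))^-1)%:E *
  ereal_sup [set area (Hg (gmean f)) | f in U1].

End Defs.

(* Main.v *)
Require Import Defs.
From HB Require Import structures.
From mathcomp Require Import all_boot all_order all_algebra.
From mathcomp Require Import all_classical all_reals all_analysis.
From mathcomp Require Import ring lra.
Import Order.TTheory GRing.Theory Num.Theory.
Import numFieldNormedType.Exports.
Local Open Scope classical_set_scope.
Local Open Scope ring_scope.

Section S.
Variable R : realType.
Local Notation leb := (@lebesgue_measure R).

Lemma leb_mono (A B : set R) : A `<=` B -> (leb A <= leb B)%E.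
Proof.
move=> AB; rewrite /lebesgue_measure /lebesgue_stieltjes_measure /measure_extension.
exact: (@le_mu_ext _ (ocitv_type R) R _ A B AB).
Qed.

Lemma area_unfold (A : set (R*R)) :
  area A = (\int[leb]_x (leb (xsection A x)))%E.
Proof. reflexivity. Qed.

Lemma int_mono (f g : R -> \bar R) : (forall x, 0 <= f x)%E ->
  (forall x, f x <= g x)%E ->
  (\int[leb]_x f x <= \int[leb]_x g x)%E.
Proof.
move=> f0 fg.
have g0 : forall x, (0 <= g x)%E by move=> x; exact: le_trans (f0 x) (fg x).
rewrite !ge0_integralTE //.
apply: le_ereal_sup => _ [h hf <-]; exists h => //= x; exact: le_trans (hf x) (fg x).
Qed.

Lemma poly_FTC (p : {poly R}) (g : R -> R) (a b : R) : a < b ->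
  (forall x, g x = (p^`()).[x]) ->
  (\int[leb]_(x in `[a, b]) (g x)%:E = (p.[b] - p.[a])%:E)%E.
Proof.
move=> ab hg.
have -> : g = horner (p^`()) by apply/funext => x; rewrite hg.
rewrite (@continuous_FTC2 _ _ (horner p)) //.
- by apply/continuous_subspaceT => x; exact: continuous_horner.
- split=> [x _| |].
  + exact: derivable_horner.
  + by apply: cvg_at_right_filter; exact: continuous_horner.
  + by apply: cvg_at_left_filter; exact: continuous_horner.
- by move=> x _; rewrite -derive.derivE.
Qed.

Lemma hull_convex (S : set (R * R)) : convex2 (hull2 S).
Proof.
move=> x y hx hy l l0 l1 C cC SC; exact: cC (hx C cC SC) (hy C cC SC) l l0 l1.
Qed.

Lemma hull_sub (S : set (R * R)) : S `<=` hull2 S.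
Proof. by move=> z Sz C _ SC; exact: SC. Qed.

Lemma seg_vert (C : set (R * R)) x y1 y2 y : convex2 C ->
  C (x, y1) -> C (x, y2) -> y1 <= y -> y <= y2 -> C (x, y).
Proof.
move=> cC h1 h2 l1 l2.
have [e|ne] := eqVneq y1 y2.
  have -> : y = y1 by apply/eqP; rewrite eq_le l1; rewrite e l2.
  exact: h1.
have lt12 : y1 < y2 by rewrite lt_neqAle ne (le_trans l1 l2).
have d0 : y2 - y1 != 0 by rewrite subr_eq0 eq_sym.
pose l := (y - y1) / (y2 - y1).
have l0 : 0 <= l by rewrite /l divr_ge0 // subr_ge0 // ltW.
have l1' : l <= 1 by rewrite /l ler_pdivrMr ?subr_gt0 // mul1r lerD2r.
have := cC _ _ h2 h1 l l0 l1'; rewrite /=.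
have -> : l * x + (1 - l) * x = x by ring.
have -> : l * y2 + (1 - l) * y1 = y by rewrite /l; field.
by [].
Qed.

Definition a : R := 3%:R / 10%:R.
Definition ff (x : R) : R := a * (9%:R * x - 19%:R * x ^+ 2 + 10%:R * x ^+ 3).
Definition Pf : {poly R} := a *: (9%:R *: 'X - 19%:R *: 'X^2 + 10%:R *: 'X^3).
Definition Pint : {poly R} := a *: ((9%:R / 2%:R) *: 'X^2 - (19%:R / 3%:R) *: 'X^3
   + (5%:R / 2%:R) *: 'X^4).
Definition PQ : {poly R} := (a ^+ 2) *: (81%:R *: 'X - 342%:R *: 'X^2
   + (1984%:R / 3%:R) *: 'X^3 - 570%:R *: 'X^4 + 180%:R *: 'X^5).
Definition G (x : R) : R := a * (9%:R / 2%:R * x - 19%:R / 3%:R * x ^+ 2 + 5%:R / 2%:R * x ^+ 3).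
Definition PH : {poly R} := a *: ((23%:R / 12%:R) *: 'X^2 - (19%:R / 9%:R) *: 'X^3
   + (5%:R / 8%:R) *: 'X^4).

Ltac hsimp := rewrite ?(derivD, derivN, derivB, derivZ, derivXn, derivX, derivC)
  ?(hornerD, hornerN, hornerZ, hornerXn, hornerMn, hornerX, hornerC).

Lemma ffE x : ff x = Pf.[x].
Proof. rewrite /ff /Pf; hsimp; ring. Qed.

Lemma PintD x : ff x = (Pint^`()).[x].
Proof. rewrite /Pint /ff; hsimp; rewrite /a; by field. Qed.

Lemma dffE x : derive1 ff x = a * (9%:R - 38%:R * x + 30%:R * x ^+ 2).
Proof.
have -> : ff = horner Pf by apply/funext => y; exact: ffE.
rewrite -derive.derivE /Pf; hsimp; ring.
Qed.

Lemma PQD x : derive1 ff x ^+ 2 = (PQ^`()).[x].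
Proof. rewrite dffE /PQ; hsimp; rewrite /a; by field. Qed.

Lemma PHD x : G x - x * G 1 = (PH^`()).[x].
Proof. rewrite /G /PH; hsimp; rewrite /a; by field. Qed.

Lemma a_gt0 : 0 < a.
Proof. rewrite /a; lra. Qed.

Lemma ff_lip u v : 0 <= u -> u <= v -> v <= 1 -> `|ff v - ff u| <= 24%:R * (v - u).
Proof.
move=> u0 uv v1.
set E := 9%:R - 19%:R * (u + v) + 10%:R * (u ^+ 2 + u * v + v ^+ 2).
have eq : ff v - ff u = a * (v - u) * E by rewrite /ff /E; ring.
have Eb : -80%:R <= E <= 80%:R.
  rewrite /E; apply/andP; split; nra.
rewrite eq normrM ger0_norm; last by apply: mulr_ge0; [exact: ltW a_gt0|rewrite subr_ge0].
have : `|E| <= 80%:R by rewrite ler_norml.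
move=> hE.
have h1 : a * (v - u) * `|E| <= a * (v - u) * 80%:R.
  apply: ler_wpM2l => //; apply: mulr_ge0; [exact: ltW a_gt0|rewrite subr_ge0//].
apply: (le_trans h1); rewrite /a; lra.
Qed.


Lemma ff_AC : abs_continuous01 ff.
Proof.
move=> eps e0; exists (eps / 24%:R); first by rewrite divr_gt0.
move=> n x y hab hdis hsum.
have h1 : \sum_(i < n) `|ff (y i) - ff (x i)| <= \sum_(i < n) 24%:R * (y i - x i).
  apply: ler_sum => i _; have [h0 [h2 h3]] := hab i (ltn_ord i).
  exact: ff_lip.
apply: (le_lt_trans h1); rewrite -mulr_sumr.
have : 24%:R * \sum_(i < n) (y i - x i) < 24%:R * (eps / 24%:R).
  by rewrite ltr_pM2l.
by have -> : 24%:R * (eps / 24%:R) = eps :> R by field.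
Qed.

Lemma ff_U1 : U1 ff.
Proof.
split.
- exact: ff_AC.
- by rewrite /ff expr0n /= expr0n /=; ring.
- rewrite (@poly_FTC PQ (fun s => derive1 ff s ^+ 2)) //; last exact: PQD.
  rewrite lee_fin /PQ; hsimp; rewrite /a; lra.
Qed.

Lemma gmeanE t : 0 <= t -> gmean ff t = G t.
Proof.
move=> t0; rewrite /gmean.
have [->|tn0] := eqVneq t 0.
  by rewrite /G expr0n /= expr0n /=; ring.
have tp : 0 < t by rewrite lt_neqAle eq_sym tn0 t0.
rewrite /Rintegral (@poly_FTC Pint ff) //; last exact: PintD.
rewrite /= /Pint /G; hsimp; rewrite expr0n /= expr0n /= expr0n /=; by field.
Qed.

Lemma G0 : G 0 = 0.
Proof. by rewrite /G expr0n /= expr0n /=; ring. Qed.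

Lemma Gchord x : 0 <= x -> x <= 1 -> x * G 1 <= G x.
Proof.
move=> x0 x1; rewrite -subr_ge0.
have -> : G x - x * G 1 = a * (5%:R / 2%:R) * (x * ((1 - x) * (23%:R / 15%:R - x))).
  rewrite /G; by field.
apply: mulr_ge0; first by rewrite /a; lra.
apply: mulr_ge0 => //; apply: mulr_ge0; lra.
Qed.

Lemma section_lb x : 0 <= x -> x <= 1 ->
  ((G x - x * G 1)%:E <= leb (xsection (Hg (gmean ff)) x))%E.
Proof.
move=> x0 x1.
set C := Hg (gmean ff).
have cC : convex2 C by exact: hull_convex.
have inS t : 0 <= t -> t <= 1 -> C (t, G t).
  move=> t0 t1; apply: hull_sub; exists t; first by rewrite /= in_itv /= t0 t1.
  by rewrite gmeanE.
have hx : C (x, G x) by exact: inS.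
have hc : C (x, x * G 1).
  have := cC _ _ (inS 1 ler01 (lexx 1)) (inS 0 (lexx 0) ler01) x x0.
  move=> /(_ x1) /=; rewrite G0.
  have -> : x * 1 + (1 - x) * 0 = x by ring.
  by have -> : x * G 1 + (1 - x) * 0 = x * G 1 by ring.
have sub : `[x * G 1, G x] `<=` xsection C x.
  move=> y; rewrite /= in_itv /= => /andP[l1 l2].
  rewrite /xsection /= inE; exact: seg_vert cC hc hx l1 l2.
apply: (le_trans _ (leb_mono _ _ sub)).
rewrite lebesgue_measure_itv /=.
have := Gchord x x0 x1; rewrite le_eqVlt => /orP[/eqP ->|hlt].
  by rewrite ltxx subrr.
by rewrite lte_fin hlt -EFinB.
Qed.

Lemma area_lb : ((a * (31%:R / 72%:R))%:E <= area (Hg (gmean ff)))%E.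
Proof.
rewrite area_unfold.
pose h := (fun x => ((G x - x * G 1)%:E)) \_ `[0, 1].
have -> : ((a * (31%:R / 72%:R))%:E = \int[leb]_x h x)%E.
  rewrite /h -integral_mkcond (@poly_FTC PH) //; last exact: PHD.
  congr (_%:E); rewrite /PH; hsimp; rewrite /a; by field.
apply: int_mono => x; rewrite /h /patch; case: ifPn => [/set_mem|_] //.
- rewrite /= in_itv /= => /andP[x0 x1].
  by rewrite lee_fin subr_ge0 Gchord.
- rewrite /= in_itv /= => /andP[x0 x1].
  exact: section_lb.
- exact: measure_ge0.
Qed.

End S.

Theorem propositionA1 (R : realType) :
  (((90435%:R / 1000000%:R : R))%:E <= vartheta R)%E.
Proof.
rewrite /vartheta.
have e1 : (1000000%:R : R) = 1000%:R * 1000%:R.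
  rewrite {1}(divn_eq 1000000 1000) natrD natrM.
  have -> : (1000000 %/ 1000 = 1000)%N by [].
  have -> : (1000000 %% 1000 = 0)%N by [].
  by rewrite addr0.
have e2 : (90435%:R : R) = 90%:R * 1000%:R + 435%:R.
  rewrite {1}(divn_eq 90435 1000) natrD natrM.
  have -> : (90435 %/ 1000 = 90)%N by [].
  by have -> : (90435 %% 1000 = 435)%N by [].
rewrite e1 e2.
have hs : ((a R * (31%:R / 72%:R))%:E <= ereal_sup [set area (Hg (gmean f)) | f in U1 (R:=R)])%E.
  apply: le_trans (area_lb R) _; apply: ereal_sup_ubound; exists (ff R); [exact: ff_U1|by []].
have sq0 : 0 < Num.sqrt (2 : R) by rewrite sqrtr_gt0; lra.
apply: le_trans (lee_wpmul2l _ hs); last by rewrite lee_fin invr_ge0 ltW.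
rewrite -EFinM lee_fin.
have sq : Num.sqrt (2 : R) <= 143%:R / 101%:R.
  have -> : 143%:R / 101%:R = Num.sqrt ((143%:R / 101%:R) ^+ 2 : R).
    by rewrite sqrtr_sqr ger0_norm //; lra.
  rewrite ler_sqrt; [lra|nra].
set c := (90%:R * 1000%:R + 435%:R) / (1000%:R * 1000%:R : R).
have c0 : 0 <= c by rewrite /c; lra.
set s := Num.sqrt (2 : R).
have st : s * s^-1 = 1 by exact: (mulfV (lt0r_neq0 sq0)).
have ti : 0 < s^-1 by rewrite invr_gt0.
have ti2 : 101%:R / 143%:R <= s^-1.
  have hp := mulr_ge0 (ltW ti) (eq_ind _ (fun b => is_true b) sq _ (esym (subr_ge0 s (143%:R / 101%:R)))).
  move: hp st; set u := s^-1; move=> hp st; nra.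
have ha : 0 <= a R * (31%:R / 72%:R) by rewrite /a; lra.
have hK := ler_wpM2r ha ti2.
move: hK; rewrite /c /a; lra.
Qed.
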